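(* Let $(X,\preceq,\{H_n\})$ be a half-space order and let a group $G$ act on $X$ unboundedly by quasi-automorphisms of defect bounded by $d$. Then there is a nonzero homogeneous quasimorphism $T_{(X,\preceq,\{H_n\})}:G\to\mathbb{R}$ of defect at most $2d$ such that for every $a\in X$ and $g\in G$, $$T_{(X,\preceq,\{H_n\})}(g)=\lim_{n\to\infty}\frac{h(g^na,a)}{n}.$$
   Context: A half-space filtration of $X$ is $\{H_n\}_{n\in\mathbb{Z}}$ with $H_{n+1}\subsetneq H_n$, $\bigcap H_n=\emptyset$, $\bigcup H_n=X$; height $h(a)=\sup\{n: a\in H_n\}$, $h(a,b)=h(a)-h(b)$. A half-space order $(X,\preceq,\{H_n\})$: $(X,\preceq)$ a poset, $\{H_n\}$ a half-space filtration, and for a constant $w$, $h(a,b)\geq w\Rightarrow a\succeq b$. The $G$-action is by quasi-automorphisms of defect bounded by $d$ if $|h(ga,gb)-h(a,b)|\leq d$ for all $g,a,b$; it is unbounded if there exist $g\in G$, $a\in X$ with $h(g^na)\to\pm\infty$ as $n\to\pm\infty$. A homogeneous quasimorphism is $f:G\to\mathbb{R}$ with defect $\sup_{g,k}|f(gk)-f(g)-f(k)|<\infty$ and $f(g^n)=nf(g)$ for $n\in\mathbb{N}$. *)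

(* Defs.v *)
From Stdlib Require Import Reals ZArith Lra Lia.
Open Scope R_scope.

Definition is_group {G : Type} (mul : G -> G -> G) (one : G) (inv : G -> G) : Prop :=
  (forall x y z, mul x (mul y z) = mul (mul x y) z) /\
  (forall x, mul one x = x) /\ (forall x, mul x one = x) /\
  (forall x, mul (inv x) x = one) /\ (forall x, mul x (inv x) = one).

Fixpoint gpow_nat {G : Type} (mul : G -> G -> G) (one : G) (g : G) (n : nat) : G :=
  match n with
  | O => one
  | S m => mul g (gpow_nat mul one g m)
  end.

Definition gpowZ {G : Type} (mul : G -> G -> G) (one : G) (inv : G -> G)
    (g : G) (n : Z) : G :=
  match n with
  | Z0 => one
  | Zpos p => gpow_nat mul one g (Pos.to_nat p)
  | Zneg p => gpow_nat mul one (inv g) (Pos.to_nat p)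
  end.

Definition is_action {G X : Type} (mul : G -> G -> G) (one : G)
    (act : G -> X -> X) : Prop :=
  (forall a, act one a = a) /\ (forall g k a, act (mul g k) a = act g (act k a)).

Definition is_half_space_filtration {X : Type} (H : Z -> X -> Prop) : Prop :=
  (forall n, (forall x, H (n + 1)%Z x -> H n x) /\ (exists x, H n x /\ ~ H (n + 1)%Z x)) /\
  (forall x, exists n, ~ H n x) /\
  (forall x, exists n, H n x).

Definition is_sup_height {X : Type} (H : Z -> X -> Prop) (a : X) (ha : Z) : Prop :=
  (forall n, H n a -> (n <= ha)%Z) /\
  (forall m, (forall n, H n a -> (n <= m)%Z) -> (ha <= m)%Z).

Definition is_height {X : Type} (H : Z -> X -> Prop) (h : X -> Z) : Prop :=
  forall a, is_sup_height H a (h a).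

Definition is_partial_order {X : Type} (le : X -> X -> Prop) : Prop :=
  (forall a, le a a) /\ (forall a b, le a b -> le b a -> a = b) /\
  (forall a b c, le a b -> le b c -> le a c).

Definition is_half_space_order {X : Type} (le : X -> X -> Prop) (H : Z -> X -> Prop)
    (h : X -> Z) : Prop :=
  is_partial_order le /\ is_half_space_filtration H /\ is_height H h /\
  exists w : Z, forall a b, (h a - h b >= w)%Z -> le b a.

Definition quasi_aut_defect_bounded {G X : Type} (act : G -> X -> X) (h : X -> Z)
    (d : R) : Prop :=
  forall g a b,
    Rabs (IZR (h (act g a) - h (act g b)) - IZR (h a - h b)) <= d.

Definition unbounded_action {G X : Type} (mul : G -> G -> G) (one : G) (inv : G -> G)
    (act : G -> X -> X) (h : X -> Z) : Prop :=
  exists g a,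
    (forall M : Z, exists N : Z, forall n : Z, (N <= n)%Z ->
        (M <= h (act (gpowZ mul one inv g n) a))%Z) /\
    (forall M : Z, exists N : Z, forall n : Z, (n <= N)%Z ->
        (h (act (gpowZ mul one inv g n) a) <= M)%Z).

Definition defect_le {G : Type} (mul : G -> G -> G) (f : G -> R) (D : R) : Prop :=
  forall g k, Rabs (f (mul g k) - f g - f k) <= D.

Definition is_homogeneous_quasimorphism {G : Type} (mul : G -> G -> G) (one : G)
    (f : G -> R) : Prop :=
  (exists D : R, defect_le mul f D) /\
  (forall (g : G) (n : nat), f (gpow_nat mul one g n) = INR n * f g).

(* Main.v *)
Require Import Defs.
From Stdlib Require Import Reals ZArith Lra Lia IndefiniteDescription.
Open Scope R_scope.

Definition cR {X G : Type} (act : G -> X -> X) (h : X -> Z) (g : G) (x : X) : R :=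
  IZR (h (act g x) - h x).

Lemma gpow_add {G : Type} (mul : G -> G -> G) (one : G) (inv : G -> G) :
  is_group mul one inv -> forall g a b,
  gpow_nat mul one g (a + b) = mul (gpow_nat mul one g a) (gpow_nat mul one g b).
Proof.
  intros [Has [H1 _]] g a b. induction a as [|a IH]; simpl.
  - now rewrite H1.
  - rewrite IH. apply Has.
Qed.

Lemma gpow_mul {G : Type} (mul : G -> G -> G) (one : G) (inv : G -> G) :
  is_group mul one inv -> forall g m n,
  gpow_nat mul one (gpow_nat mul one g m) n = gpow_nat mul one g (m * n).
Proof.
  intros Hg g m n. induction n as [|n IH]; simpl.
  - now rewrite Nat.mul_0_r.
  - rewrite IH. replace (m * S n)%nat with (m + m * n)%nat by lia.
    now rewrite (gpow_add mul one inv Hg).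
Qed.

Lemma arch_mul : forall C a, 0 < a -> exists N : nat, (1 <= N)%nat /\ C < INR N * a.
Proof.
  intros C a Ha.
  destruct (archimed (Rabs (C / a))) as [Hu _].
  exists (S (Z.to_nat (up (Rabs (C / a))))). split; [lia|].
  assert (Hz: (0 <= up (Rabs (C/a)))%Z).
  { apply le_IZR. pose proof (Rabs_pos (C/a)). lra. }
  rewrite S_INR, INR_IZR_INZ, Z2Nat.id by exact Hz.
  assert (C / a <= Rabs (C/a)) by apply RRle_abs.
  assert (C = (C / a) * a) by (field; lra).
  assert (C / a < IZR (up (Rabs (C / a))) + 1) by lra.
  rewrite H0 at 1. apply Rmult_lt_compat_r; lra.
Qed.

Lemma inv_small : forall C eps, 0 < eps ->
  exists N : nat, (1 <= N)%nat /\ forall n, (N <= n)%nat -> C / INR n < eps.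
Proof.
  intros C eps He. destruct (arch_mul C eps He) as [N [HN HC]].
  exists N. split; auto. intros n Hn.
  assert (Hn0 : 0 < INR n) by (apply lt_0_INR; lia).
  assert (INR N <= INR n) by (apply le_INR; lia).
  apply (Rmult_lt_reg_r (INR n)); auto.
  unfold Rdiv. rewrite Rmult_assoc, Rinv_l by lra. nra.
Qed.

Lemma div_bound : forall A B D n, 0 < n -> Rabs (A - n * B) <= D ->
  Rabs (A / n - B) <= D / n.
Proof.
  intros A B D n Hn H.
  replace (A / n - B) with ((A - n * B) * / n) by (field; lra).
  rewrite Rabs_mult, (Rabs_right (/ n)) by (left; apply Rinv_0_lt_compat; lra).
  apply Rmult_le_compat_r; [left; apply Rinv_0_lt_compat; lra| exact H].
Qed.

Lemma mul_bound : forall A B D n, 0 < n -> Rabs (A / n - B) <= D / n ->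
  Rabs (A - n * B) <= D.
Proof.
  intros A B D n Hn H.
  replace (A - n * B) with (n * (A / n - B)) by (field; lra).
  replace D with (n * (D / n)) by (field; lra).
  rewrite Rabs_mult, (Rabs_right n) by lra.
  apply Rmult_le_compat_l; lra.
Qed.

Lemma zero_lemma : forall z C, (forall m : nat, (1 <= m)%nat -> INR m * Rabs z <= C) -> z = 0.
Proof.
  intros z C H. destruct (Req_dec z 0) as [E|E]; auto.
  assert (Hz : 0 < Rabs z) by (apply Rabs_pos_lt; auto).
  destruct (arch_mul C (Rabs z) Hz) as [N [HN HC]].
  specialize (H N HN). lra.
Qed.

Lemma Rabs_between : forall x a, Rabs x <= a <-> -a <= x <= a.
Proof.
  intros x a. unfold Rabs. destruct (Rcase_abs x); split; intros; lra.
Qed.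

Theorem corollary2p2
  (X : Type) (le : X -> X -> Prop) (H : Z -> X -> Prop) (h : X -> Z)
  (G : Type) (mul : G -> G -> G) (one : G) (inv : G -> G)
  (act : G -> X -> X) (d : R) :
  is_half_space_order le H h ->
  is_group mul one inv ->
  is_action mul one act ->
  quasi_aut_defect_bounded act h d ->
  unbounded_action mul one inv act h ->
  exists T : G -> R,
    is_homogeneous_quasimorphism mul one T /\
    defect_le mul T (2 * d) /\
    (exists g, T g <> 0) /\
    (forall (a : X) (g : G),
        Un_cv (fun n : nat => IZR (h (act (gpow_nat mul one g n) a) - h a) / INR n) (T g)).
Proof.
  intros _ Hg [Ha1 HaM] Hq Hunb.
  set (c := cR act h).
  set (pw := gpow_nat mul one).
  assert (PS : forall p n, pw p (S n) = mul p (pw p n)) by reflexivity.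
  assert (P0 : forall p, pw p O = one) by reflexivity.
  assert (F1 : forall g x y, Rabs (c g x - c g y) <= d).
  { intros g x y. specialize (Hq g x y). unfold c, cR.
    replace (IZR (h (act g x) - h x) - IZR (h (act g y) - h y)) with
      (IZR (h (act g x) - h (act g y)) - IZR (h x - h y)) by
      (rewrite !minus_IZR; ring). exact Hq. }
  assert (Hd : 0 <= d).
  { destruct Hunb as [_ [a _]]. specialize (F1 one a a).
    rewrite Rminus_diag, Rabs_R0 in F1. exact F1. }
  assert (Cmul : forall g p x, c (mul g p) x = c g (act p x) + c p x).
  { intros g p x. unfold c, cR. rewrite HaM, <- plus_IZR. f_equal. ring. }
  assert (Cone : forall x, c one x = 0).
  { intros x. unfold c, cR. rewrite Ha1. now rewrite Z.sub_diag. }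
  assert (Q : forall p n x y, Rabs (c (pw p n) x - INR n * c p y) <= INR n * d).
  { intros p n. induction n as [|n IH]; intros x y.
    - rewrite P0, Cone. simpl INR. rewrite Rmult_0_l, Rminus_0_r, Rabs_R0. lra.
    - rewrite PS, Cmul, S_INR.
      specialize (IH x y). specialize (F1 p (act (pw p n) x) y).
      apply Rabs_between in IH. apply Rabs_between in F1.
      apply Rabs_between. nra. }
  assert (P : forall g k n x,
    Rabs (c (pw (mul g k) n) x - c (pw g n) x - c (pw k n) x) <= 2 * INR n * d).
  { intros g k n x. induction n as [|n IH].
    - rewrite !P0, !Cone. simpl INR. rewrite Rmult_0_r, Rmult_0_l.
      replace (0 - 0 - 0) with 0 by ring. rewrite Rabs_R0. lra.
    - rewrite !PS, !Cmul, S_INR.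
      pose proof (F1 g (act k (act (pw (mul g k) n) x)) (act (pw g n) x)) as A1.
      pose proof (F1 k (act (pw (mul g k) n) x) (act (pw k n) x)) as A2.
      apply Rabs_between in IH. apply Rabs_between in A1. apply Rabs_between in A2.
      apply Rabs_between. nra. }
  assert (K : forall g (m n : nat) (x y : X), (1 <= m)%nat -> (1 <= n)%nat ->
    Rabs (c (pw g (m * n)%nat) y / INR (m * n) - c (pw g m) x / INR m) <= d / INR m).
  { intros g m n x y Hm Hn.
    assert (Hm0 : 0 < INR m) by (apply lt_0_INR; lia).
    assert (Hn0 : 0 < INR n) by (apply lt_0_INR; lia).
    pose proof (Q (pw g m) n y x) as Qi. unfold pw in Qi.
    rewrite (gpow_mul mul one inv Hg) in Qi. fold pw in Qi.
    replace (d / INR m) with (INR n * d / INR (m * n)) by (rewrite mult_INR; field; lra).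
    apply div_bound. rewrite mult_INR; nra.
    replace (INR (m * n) * (c (pw g m) x / INR m)) with (INR n * c (pw g m) x)
      by (rewrite mult_INR; field; lra).
    exact Qi. }
  destruct Hunb as [g0 [a0 [Hup _]]].
  assert (Hex : forall g, exists L, forall m x, Rabs (c (pw g m) x - INR m * L) <= d).
  { intros g.
    set (Un := fun n => c (pw g n) a0 / INR n).
    assert (Cc : Cauchy_crit Un).
    { intros eps He.
      destruct (inv_small d (eps/2)) as [N [HN HNs]]; [lra|].
      exists N. intros n m Hn Hm. unfold R_dist, Un.
      pose proof (K g n m a0 a0 ltac:(lia) ltac:(lia)) as K1.
      pose proof (K g m n a0 a0 ltac:(lia) ltac:(lia)) as K2.
      rewrite Nat.mul_comm in K2.
      specialize (HNs n Hn) as S1. specialize (HNs m Hm) as S2.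
      apply Rabs_between in K1. apply Rabs_between in K2.
      apply Rabs_def1; lra. }
    destruct (R_complete Un Cc) as [L HL].
    exists L. intros m x. destruct m as [|m'].
    - rewrite P0, Cone. simpl INR. rewrite Rmult_0_l, Rminus_0_r, Rabs_R0. exact Hd.
    - set (m := S m').
      assert (Hm0 : 0 < INR m) by (apply lt_0_INR; unfold m; lia).
      apply mul_bound; auto.
      apply Rle_plus_epsilon. intros eps He.
      destruct (HL eps He) as [N HN].
      specialize (HN (m * S N)%nat ltac:(unfold m; lia)).
      pose proof (K g m (S N) x a0 ltac:(unfold m; lia) ltac:(lia)) as K1.
      unfold R_dist, Un in HN.
      apply Rabs_def2 in HN. apply Rabs_between in K1. apply Rabs_between. lra. }
  set (T := fun g => proj1_sig (constructive_indefinite_description _ (Hex g))).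
  assert (HB : forall g m x, Rabs (c (pw g m) x - INR m * T g) <= d).
  { intros g. exact (proj2_sig (constructive_indefinite_description _ (Hex g))). }
  clearbody T.
  assert (Hdef : forall g k, Rabs (T (mul g k) - T g - T k) <= 2 * d).
  { intros g k. set (E := T (mul g k) - T g - T k).
    assert (Hn : forall n : nat, (1 <= n)%nat -> INR n * Rabs E <= 2 * INR n * d + 3 * d).
    { intros n Hn. assert (Hn0 : 0 < INR n) by (apply lt_0_INR; lia).
      pose proof (HB (mul g k) n a0) as B1. pose proof (HB g n a0) as B2.
      pose proof (HB k n a0) as B3. pose proof (P g k n a0) as B4.
      assert (R1 : Rabs (INR n * E) <= 2 * INR n * d + 3 * d).
      { apply Rabs_between in B1. apply Rabs_between in B2.
        apply Rabs_between in B3. apply Rabs_between in B4.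
        apply Rabs_between. unfold E. lra. }
      rewrite Rabs_mult, (Rabs_right (INR n)) in R1 by lra. exact R1. }
    destruct (Rle_lt_dec (Rabs E) (2 * d)) as [Hl|Hl]; auto.
    exfalso. destruct (arch_mul (3 * d) (Rabs E - 2 * d)) as [N [HN HC]]; [lra|].
    specialize (Hn N HN). nra. }
  assert (Hhom : forall g n, T (pw g n) = INR n * T g).
  { intros g n.
    assert (Z0 : T (pw g n) - INR n * T g = 0).
    { apply (zero_lemma _ (2 * d)). intros m Hm.
      assert (Hm0 : 0 < INR m) by (apply lt_0_INR; lia).
      pose proof (HB (pw g n) m a0) as B1. pose proof (HB g (n * m)%nat a0) as B2.
      unfold pw in B1 at 1. rewrite (gpow_mul mul one inv Hg) in B1. fold pw in B1.
      rewrite mult_INR in B2.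
      assert (R1 : Rabs (INR m * (T (pw g n) - INR n * T g)) <= 2 * d).
      { apply Rabs_between in B1. apply Rabs_between in B2.
        apply Rabs_between. lra. }
      rewrite Rabs_mult, (Rabs_right (INR m)) in R1 by lra. exact R1. }
    lra. }
  exists T. split; [split|split; [|split]].
  - exists (2 * d). exact Hdef.
  - exact Hhom.
  - exact Hdef.
  - exists g0. intros HT0.
    destruct (Hup (h a0 + up d)%Z) as [N HN].
    set (k := Z.to_nat N).
    specialize (HN (Z.of_nat (S k)) ltac:(unfold k; lia)).
    assert (E : gpowZ mul one inv g0 (Z.of_nat (S k)) = pw g0 (S k)).
    { simpl. unfold pw. now rewrite SuccNat2Pos.id_succ. }
    rewrite E in HN.
    pose proof (HB g0 (S k) a0) as B. rewrite HT0, Rmult_0_r, Rminus_0_r in B.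
    apply Rabs_between in B.
    assert (IZR (h (act (pw g0 (S k)) a0) - h a0) >= IZR (up d)).
    { apply Rle_ge, IZR_le. lia. }
    destruct (archimed d). unfold c, cR in B. lra.
  - intros a g eps He.
    destruct (inv_small d eps He) as [N [HN HNs]].
    exists N. intros n Hn. unfold R_dist.
    assert (Hn0 : 0 < INR n) by (apply lt_0_INR; lia).
    pose proof (div_bound _ _ _ _ Hn0 (HB g n a)) as B.
    eapply Rle_lt_trans; [exact B|]. apply HNs; exact Hn.
Qed.
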